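(* Let $s$ be a Thiele scoring function with $s(2)-s(1)<s(1)$. Then the query function $g$ of the sequential Thiele rule induced by $s$, namely $g(A,k,(c_1,\dots,c_\ell))=\arg\max_{x\in C\setminus\{c_1,\dots,c_\ell\}}\hat s(A,\{x,c_1,\dots,c_\ell\})$, is standard, continuous and concurring.
   Context: Candidates form a finite set $C$, $|C|=m>1$. An approval profile $A$ has a nonempty finite voter set $N_A$, each $i\in N_A$ having a nonempty ballot $A_i\subseteq C$; $N_A(c)=\{i\in N_A:c\in A_i\}$, $n=|N_A|$. For profiles $A,A'$ and $\lambda\in\mathbb N$, $\lambda A+A'$ is the profile containing $\lambda$ copies of each voter of $A$ plus a copy of each voter of $A'$. A Thiele scoring function is $s:\mathbb N_0\to\mathbb Q$ with $s(0)=0$, $s(1)>0$, $s$ nondecreasing and concave ($s(x+1)-s(x)\ge s(x+2)-s(x+1)$); $\hat s(A,W)=\sum_{i\in N_A}s(|A_i\cap W|)$. $\mathcal S(C)$ is the set of non-repeating candidate sequences of length at most $m-2$. Axioms on a query function $g$ (mapping $(A,k,S)$, $S=(c_1,\dots,c_\ell)\in\mathcal S(C)$, to a subset of $C\setminus\{c_1,\dots,c_\ell\}$): (Continuity) for all $A,A',k,S$, $g(\lambda A+A',k,S)\subseteq g(A,k,S)$ for all sufficiently large $\lambda$. (Standardness) $g(A,k,\emptyset)$ is the set of candidates maximizing $|N_A(c)|$. (Concurrence) for every profile $A$ with $|A_i|\le2$ for all $i$ and $|N_A(c)|=|N_A(d)|\le n/k$ for all $c,d\in C$, every $(c_1,\dots,c_\ell)\in\mathcal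 S(C)$, and all $c,d\in C\setminus\{c_1,\dots,c_\ell\}$ with $|\{i:A_i=\{c_j,d\}\}|\ge|\{i:A_i=\{c_j,c\}\}|$ for all $j\le\ell$, at least one strictly, we have $d\notin g(A,k,(c_1,\dots,c_\ell))$. *)

(* Defs.v *)
From HB Require Import structures.
From mathcomp Require Import all_boot all_order all_algebra.
Set Implicit Arguments. Unset Strict Implicit. Unset Printing Implicit Defensive.
Import Order.TTheory GRing.Theory Num.Theory.
Local Open Scope ring_scope.

Section Defs.
Variable C : finType.

(* An approval profile: a finite list of voters, each given by a ballot.
   Voters are list entries (duplicates = distinct voters with equal ballots). *)
Local Notation profile := (seq {set C}).

Definition profile_ok (A : profile) : bool :=
  (A != [::]) && all (fun b : {set C} => b != set0) A.

Definition napp (A : profile) (c : C) : nat := count (fun b : {set C} => c \in b) A.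

Definition pscale_add (lam : nat) (A A' : profile) : profile :=
  flatten (nseq lam A) ++ A'.

Definition thiele_fn (s : nat -> rat) : Prop :=
  [/\ s 0%N = 0, 0 < s 1%N,
      (forall x, s x <= s x.+1) &
      (forall x, s x.+2 - s x.+1 <= s x.+1 - s x)].

Definition thiele_score (s : nat -> rat) (A : profile) (W : {set C}) : rat :=
  \sum_(b <- A) s #|b :&: W|.

Definition valid_seq (S : seq C) : bool := uniq S && (size S <= #|C| - 2)%N.

Definition query_fn := profile -> nat -> seq C -> {set C}.

Definition seq_thiele (s : nat -> rat) : query_fn :=
  fun A _ S =>
    [set x | (x \notin S) &&
       [forall y, (y \notin S) ==>
          (thiele_score s A (y |: [set z in S]) <=
           thiele_score s A (x |: [set z in S]))]].

Definition continuity (g : query_fn) : Prop :=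
  forall (A A' : profile) (k : nat) (S : seq C),
    profile_ok A -> profile_ok A' -> valid_seq S ->
    exists L : nat, forall lam : nat, (L <= lam)%N ->
      g (pscale_add lam A A') k S \subset g A k S.

Definition standardness (g : query_fn) : Prop :=
  forall (A : profile) (k : nat), profile_ok A ->
    g A k [::] = [set c | [forall d, (napp A d <= napp A c)%N]].

Definition npair (A : profile) (x y : C) : nat :=
  count (fun b : {set C} => b == [set x; y]) A.

Definition concurrence (g : query_fn) : Prop :=
  forall (A : profile) (k : nat), profile_ok A -> (0 < k)%N ->
    (forall b, b \in A -> (#|b| <= 2)%N) ->
    (forall c d : C, napp A c = napp A d) ->
    (forall c : C, (k * napp A c <= size A)%N) ->
    forall (S : seq C) (c d : C), valid_seq S ->
      c \notin S -> d \notin S ->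
      (forall cj, cj \in S -> (npair A cj c <= npair A cj d)%N) ->
      (exists2 cj, cj \in S & (npair A cj c < npair A cj d)%N) ->
      d \notin g A k S.

End Defs.

(* Main.v *)
Require Import Defs.
From HB Require Import structures.
From mathcomp Require Import all_boot all_order all_algebra.
From mathcomp Require Import ring lra.
Import Order.TTheory GRing.Theory Num.Theory.
Local Open Scope ring_scope.

Section Aux.
Variable C : finType.
Implicit Types (s : nat -> rat) (b SS : {set C}) (A : seq {set C}) (x : C).

Lemma score_cons s b A W :
  thiele_score s (b :: A) W = s #|b :&: W| + thiele_score s A W.
Proof. by rewrite /thiele_score big_cons. Qed.

Lemma card_step b SS x : x \notin SS -> x \in b ->
  #|b :&: (x |: SS)| = (#|b :&: SS|).+1.
Proof.
move=> xS xb.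
have -> : b :&: (x |: SS) = x |: (b :&: SS).
  apply/setP => y; rewrite !inE; case: eqP => [->|//]; by rewrite xb.
by rewrite cardsU1 inE (negbTE xS) andbF.
Qed.

Lemma card_le1 b SS x : x \notin SS -> x \in b -> (#|b| <= 2)%N ->
  (#|b :&: SS| <= 1)%N.
Proof.
move=> xS xb hb.
have := subset_leq_card (subsetIl b (x |: SS)).
by rewrite card_step // => h; have := leq_trans h hb.
Qed.

Lemma sstep s b SS x : s 0%N = 0 -> x \notin SS ->
  (x \in b -> (#|b :&: SS| <= 1)%N) ->
  s #|b :&: (x |: SS)| = s #|b :&: SS| + (x \in b : nat)%:R * s 1%N
     - ((x \in b) && (b :&: SS != set0) : nat)%:R * (s 1%N + s 1%N - s 2%N).
Proof.
move=> s0 xS H; case xb: (x \in b) => /=.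
- rewrite card_step //; have := H xb.
  rewrite -cards_eq0; case: #|b :&: SS| => [|[|n]] //= _.
  + rewrite s0; lra.
  + lra.
- have -> : b :&: (x |: SS) = b :&: SS.
    apply/setP => y; rewrite !inE; case: eqP => [->|//]; by rewrite xb.
  lra.
Qed.

Lemma score_step s A SS x : s 0%N = 0 -> x \notin SS ->
  (forall b, b \in A -> x \in b -> (#|b :&: SS| <= 1)%N) ->
  thiele_score s A (x |: SS) = thiele_score s A SS + (napp A x)%:R * s 1%N
   - (count (fun b => (x \in b) && (b :&: SS != set0)) A)%:R * (s 1%N + s 1%N - s 2%N).
Proof.
move=> s0 xS; elim: A => [|b A IH] H.
  rewrite /thiele_score /napp !big_nil /=; lra.
rewrite !score_cons IH; last by move=> b' b'A; apply: H; rewrite inE b'A orbT.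
rewrite sstep //; last by apply: H; rewrite inE eqxx.
rewrite /napp /= !natrD; ring.
Qed.

Lemma pb_eq b (S : seq C) x : uniq S -> x \notin S -> (#|b| <= 2)%N ->
  ((x \in b) && (b :&: [set z in S] != set0) : nat) =
  count (fun cj => b == [set cj; x]) S.
Proof.
move=> uS xS hb.
case: (boolP ((x \in b) && (b :&: [set z in S] != set0))) => /= H.
- case/andP: H => xb /set0Pn [cj]; rewrite !inE => /andP[cjb cjS].
  have cjx : cj != x by apply/eqP => E; rewrite -E cjS in xS.
  have Eb : b = [set cj; x].
    apply/eqP; rewrite eq_sym eqEcard subUset !sub1set cjb xb cards2 cjx /=.
    exact: hb.
  rewrite Eb (@eq_in_count _ _ (pred1 cj)) ?count_uniq_mem ?cjS //.
  move=> cj' cj'S /=; apply/eqP/eqP => [E|->//].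
  have : cj' \in [set cj; x] by rewrite E !inE eqxx.
  rewrite !inE => /orP[/eqP//|/eqP E']; by rewrite -E' cj'S in xS.
- apply/esym/eqP; rewrite -leqn0 leqNgt -has_count; apply/hasPn => cj cjS.
  apply/negP => /eqP Eb; move: H; rewrite Eb !inE eqxx orbT /=.
  case/negP; apply/set0Pn; exists cj; by rewrite !inE eqxx cjS.
Qed.

Lemma q_eq A (S : seq C) x : uniq S -> x \notin S ->
  (forall b, b \in A -> (#|b| <= 2)%N) ->
  count (fun b => (x \in b) && (b :&: [set z in S] != set0)) A
  = (\sum_(cj <- S) npair A cj x)%N.
Proof.
move=> uS xS; elim: A => [|b A IH] H.
  by rewrite big1.
rewrite /npair /=. rewrite big_split /= -/(npair _ _ _).
rewrite IH; last by move=> b' b'A; apply: H; rewrite inE b'A orbT.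
congr (_ + _)%N.
- rewrite pb_eq //; last by apply: H; rewrite inE eqxx.
  elim: (S) => [|y t IHt]; first by rewrite big_nil.
  by rewrite big_cons /= IHt.
Qed.

Lemma sum_lt (S : seq C) (f g : C -> nat) cj : uniq S -> cj \in S ->
  (forall i, i \in S -> (f i <= g i)%N) -> (f cj < g cj)%N ->
  (\sum_(i <- S) f i < \sum_(i <- S) g i)%N.
Proof.
move=> uS cjS Hle Hlt.
rewrite !(bigD1_seq cj) //= -addSn; apply: leq_add => //.
rewrite big_seq_cond [X in (_ <= X)%N]big_seq_cond; apply: leq_sum => i /andP[iS _].
exact: Hle.
Qed.

Lemma score1 s A x : s 0%N = 0 ->
  thiele_score s A [set x] = (napp A x)%:R * s 1%N.
Proof.
move=> s0; elim: A => [|b A IH]; first by rewrite /thiele_score big_nil mul0r.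
rewrite score_cons IH /napp /= natrD mulrDl; congr (_ + _).
case xb: (x \in b).
- have -> : b :&: [set x] = [set x].
    apply/setP => y; rewrite !inE; case: eqP => [->|]; by rewrite ?xb ?andbF.
  by rewrite cards1 mul1r.
- have -> : b :&: [set x] = set0.
    apply/setP => y; rewrite !inE; case: eqP => [->|]; by rewrite ?xb ?andbF.
  by rewrite cards0 s0 mul0r.
Qed.

Lemma pscale_score s lam A A' W :
  thiele_score s (pscale_add lam A A') W
  = lam%:R * thiele_score s A W + thiele_score s A' W.
Proof.
rewrite /pscale_add /thiele_score big_cat /=; congr (_ + _).
elim: lam => [|n IH]; first by rewrite big_nil mul0r.
rewrite /= big_cat IH -[n.+1]addn1 natrD mulrDl mul1r addrC.
by [].
Qed.

Lemma fin_unif (T : finType) (P : T -> nat -> Prop) :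
  (forall t, exists L, forall lam, (L <= lam)%N -> P t lam) ->
  exists L, forall t lam, (L <= lam)%N -> P t lam.
Proof.
move=> H.
suff [L HL]: exists L, forall t, t \in enum T -> forall lam, (L <= lam)%N -> P t lam.
  by exists L => t; apply: HL; rewrite mem_enum.
elim: (enum T) => [|t r [L HL]]; first by exists 0%N.
have [L1 H1] := H t.
exists (maxn L L1) => y; rewrite inE => /orP[/eqP->|ys] lam Hl.
  by apply: H1; exact: leq_trans (leq_maxr _ _) Hl.
by apply: HL => //; exact: leq_trans (leq_maxl _ _) Hl.
Qed.

End Aux.

Theorem mainTheorem4 (C : finType) (s : nat -> rat) :
  (1 < #|C|)%N -> thiele_fn s -> s 2%N - s 1%N < s 1%N ->
  [/\ standardness (seq_thiele (C:=C) s),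
      continuity (seq_thiele (C:=C) s) &
      concurrence (seq_thiele (C:=C) s)].
Proof.
move=> _ [s0 s1 _ _] s21; split.
- move=> A k _; apply/setP => x; rewrite !inE in_nil /=.
  have E : [set z in ([::] : seq C)] = set0 by apply/setP => z; rewrite !inE.
  rewrite E; apply: eq_forallb => y /=.
  by rewrite !setU0 !score1 // ler_pM2r // ler_nat.
- move=> A A' k S _ _ _.
  suff key : forall x, exists L, forall lam, (L <= lam)%N ->
     x \in seq_thiele s (pscale_add lam A A') k S -> x \in seq_thiele s A k S.
    have [L HL] := @fin_unif C _ key.
    by exists L => lam Hl; apply/subsetP => x; exact: HL.
  move=> x; case xg: (x \in seq_thiele s A k S); first by exists 0%N.
  move: xg; rewrite inE; case xS: (x \in S) => /=.
    by exists 0%N => lam _; rewrite inE xS.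
  move/negbT/forallPn => [y]; rewrite negb_imply -ltNge => /andP[yS Hy].
  set D := thiele_score s A (y |: [set z in S]) - thiele_score s A (x |: [set z in S]).
  set E := thiele_score s A' (x |: [set z in S]) - thiele_score s A' (y |: [set z in S]).
  exists (Num.Def.archi_bound `|E / D|) => lam Hl.
  rewrite inE xS /= => /forallP/(_ y); rewrite yS /= !pscale_score => Hc.
  have D0 : 0 < D by rewrite subr_gt0.
  have HE : E < lam%:R * D.
    apply: (@le_lt_trans _ _ (`|E / D| * D)).
      rewrite -{1}(divfK (lt0r_neq0 D0) E); apply: ler_wpM2r; first exact: ltW.
      exact: ler_norm.
    apply: (@lt_le_trans _ _ ((Num.Def.archi_bound `|E / D|)%:R * D)).
      by rewrite ltr_pM2r // archi_boundP.
    by rewrite ler_pM2r // ler_nat.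
  move: HE Hc; rewrite /D /E mulrBr; lra.
- move=> A k _ _ Hsz Hnapp _ S c d vS cS dS Hle [cj cjS Hlt].
  have uS : uniq S by case/andP: vS.
  rewrite inE dS /=; apply/forallPn; exists c.
  rewrite negb_imply cS /= -ltNge.
  have hyp x : x \notin S -> forall b, b \in A -> x \in b ->
      (#|b :&: [set z in S]| <= 1)%N.
    move=> xS b bA xb; apply: card_le1 xb (Hsz b bA); by rewrite inE.
  rewrite (score_step _ _ _ _ _ s0 _ (hyp d dS)) ?inE //.
  rewrite (score_step _ _ _ _ _ s0 _ (hyp c cS)) ?inE //.
  rewrite (Hnapp d c) !q_eq //.
  rewrite ltrD2l ltrN2 ltr_pM2r; last by lra.
  rewrite ltr_nat; exact: sum_lt cjS Hle Hlt.
Qed.
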